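(* Let $(\hat\sigma(n))_{n\ge0}$ be defined by $\hat\sigma(0)=1$, $\hat\sigma(1)=-\tfrac13$, and for $n\ge1$: $\hat\sigma(2n)=\hat\sigma(n)$, $\hat\sigma(2n+1)=-\tfrac12(\hat\sigma(n)+\hat\sigma(n+1))$. Let $K,L\ge9$ be odd natural numbers. If $K$ and $L$ are TM-equivalent, then $l(K)=l(L)$.
   Context: Two numbers $K,L\ge0$ are TM-equivalent if $\hat\sigma(2K+1)=\hat\sigma(2L+1)$. For odd $K$, $l(K)=a_1+\dots+a_r$ where $K_0=K$, $K_{i-1}=2^{a_i}K_i+1$ with $K_i$ odd, $a_i\ge1$, and $K_r=1$; equivalently $l(K)=\lfloor\log_2K\rfloor$. *)

(* Defs.v *)
From mathcomp Require Import all_boot all_order all_algebra.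
Set Implicit Arguments. Unset Strict Implicit. Unset Printing Implicit Defensive.
Import GRing.Theory Num.Theory.
Local Open Scope ring_scope.

(* sigma_hat with fuel: each recursive call is on a strictly smaller argument. *)
Fixpoint sigma_hat_fuel (fuel : nat) (n : nat) : rat :=
  match fuel with
  | 0%N => 0
  | f.+1 =>
    if n == 0%N then 1
    else if n == 1%N then - (1 / 3%:R)
    else if ~~ odd n then sigma_hat_fuel f n./2
    else - (1 / 2%:R) * (sigma_hat_fuel f n./2 + sigma_hat_fuel f (n./2).+1)
  end.

Definition sigma_hat (n : nat) : rat := sigma_hat_fuel n.+1 n.

Definition TM_equiv (K L : nat) : Prop :=
  sigma_hat (2 * K + 1)%N = sigma_hat (2 * L + 1)%N.

(* l(K) for odd K, following the paper: K_{i-1} = 2^{a_i} K_i + 1, K_i odd,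
   K_r = 1, l(K) = a_1 + ... + a_r.  Here a = logn 2 (K-1) is the 2-adic
   valuation of K - 1 and K' = (K-1) / 2^a. *)
Fixpoint l_fuel (fuel : nat) (K : nat) : nat :=
  match fuel with
  | 0%N => 0%N
  | f.+1 =>
    if (K <= 1)%N then 0%N
    else (logn 2 K.-1 + l_fuel f (K.-1 %/ 2 ^ logn 2 K.-1))%N
  end.

Definition l (K : nat) : nat := l_fuel K K.

(* Main.v *)
Require Import Defs.
From mathcomp Require Import all_boot all_order all_algebra zify ring lra.
Import GRing.Theory Num.Theory.
Local Open Scope ring_scope.

Lemma half_lt n : (0 < n)%N -> (n./2 < n)%N.
Proof. move=> h; have := odd_double_half n; rewrite -muln2; case: (odd n) => /=; lia. Qed.
Lemma half_lt1 n : (2 < n)%N -> ((n./2).+1 < n)%N.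
Proof. move=> h; have := odd_double_half n; rewrite -muln2; case: (odd n) => /=; lia. Qed.

Lemma fuel_eq f g n : (n < f)%N -> (n < g)%N -> sigma_hat_fuel f n = sigma_hat_fuel g n.
Proof.
elim: f g n => [|f IH] [|g] n //= hf hg.
case: ifP => // /eqP n0; case: ifP => // /eqP n1.
have n2 : (2 <= n)%N by lia.
case: ifP => ev.
  have := half_lt n ltac:(lia); by move=> hh; rewrite (IH g) //; lia.
have n3 : (2 < n)%N.
  by move: n0 n1 n2 ev; case: (n) => [|[|[|]]].
have := half_lt n ltac:(lia); have := half_lt1 n n3.
by move=> h1 h2; rewrite (IH g) ?(IH g (n./2).+1) //; lia.
Qed.

Lemma fuel_S f n : sigma_hat_fuel f.+1 n =
    if n == 0%N then 1
    else if n == 1%N then - (1 / 3%:R)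
    else if ~~ odd n then sigma_hat_fuel f n./2
    else - (1 / 2%:R) * (sigma_hat_fuel f n./2 + sigma_hat_fuel f (n./2).+1).
Proof. by []. Qed.

Lemma sh_even n : (0 < n)%N -> sigma_hat n.*2 = sigma_hat n.
Proof.
move=> h; rewrite {1}/sigma_hat fuel_S odd_double /=.
have -> : (n.*2 == 0%N) = false by apply/eqP; lia.
have -> : (n.*2 == 1%N) = false by apply/eqP; lia.
rewrite half_double; apply: fuel_eq; lia.
Qed.

Lemma sh_odd n : (0 < n)%N -> sigma_hat n.*2.+1 = - (1 / 2%:R) * (sigma_hat n + sigma_hat n.+1).
Proof.
move=> h; rewrite {1}/sigma_hat fuel_S.
have -> : (n.*2.+1 == 1%N) = false by apply/eqP; lia.
have -> : ((n.*2.+1)./2 = n)%N by rewrite /= uphalf_double.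
have -> : odd n.*2.+1 = true by rewrite /= odd_double.
rewrite (fuel_eq (n.*2.+1) (n.+1) n) ?(fuel_eq (n.*2.+1) (n.+2) n.+1) //; lia.
Qed.
Lemma base n : (2^3 <= n <= 2^4)%N -> exists w : int,
  sigma_hat n * (3 * 2^1)%:R = (2*w + Posz (odd n))%:~R.
Proof.
move=> /andP[h1 h2].
have [m [-> hm]] : exists m, n = (8 + m)%N /\ (m <= 8)%N by exists (n - 8)%N; split; lia.
case: m hm => [|[|[|[|[|[|[|[|[|m]]]]]]]]] hm; last lia.
- by exists (-1).
- by exists 0.
- by exists 0.
- by exists (-1).
- by exists 1.
- by exists (-1).
- by exists 0.
- by exists 0.
- by exists (-1).
Qed.

Lemma inv j n : (2^(j+3) <= n <= 2^(j+4))%N -> exists w : int,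
  sigma_hat n * (3 * 2^(j+1))%:R = (2*w + Posz (odd n))%:~R.
Proof.
elim: j n => [|j IH] n hn; first exact: base.
have Hn := odd_double_half n.
have E : (3 * 2 ^ (j.+1 + 1) = 2 * (3 * 2^(j+1)))%N by rewrite addSn expnS mulnCA.
rewrite E natrM.
set X := ((3 * 2^(j+1))%:R : rat).
have e3 : (2^(j.+1+3) = 2 * 2^(j+3))%N by rewrite addSn expnS.
have e4 : (2^(j.+1+4) = 2 * 2^(j+4))%N by rewrite addSn expnS.
rewrite e3 e4 in hn.
have p3 : (0 < 2^(j+3))%N by rewrite expn_gt0.
move: (n./2) Hn => m Hn.
case On: (odd n) Hn => /= Hn.
- have [w1 H1] := IH m ltac:(lia).
  have [w2 H2] := IH m.+1 ltac:(lia).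
  have -> : n = m.*2.+1 by lia.
  rewrite sh_odd; last lia.
  have -> : - (1 / 2%:R) * (sigma_hat m + sigma_hat m.+1) * (2%:R * X)
      = - (sigma_hat m * X + sigma_hat m.+1 * X) by field.
  rewrite H1 H2 /= ?odd_double /=.
  case: (odd m) => /=.
  + exists (- (w1 + w2) - 1).
    rewrite !intrD !intrM ?intrN /=; ring.
  + exists (- (w1 + w2) - 1).
    rewrite !intrD !intrM ?intrN /=; ring.
- have [w1 H1] := IH m ltac:(lia).
  have -> : n = m.*2 by lia.
  rewrite sh_even; last lia.
  rewrite ?odd_double.
  exists (2 * w1 + Posz (odd m)).
  have -> : sigma_hat m * (2%:R * X) = 2%:R * (sigma_hat m * X) by ring.
  rewrite H1 !intrD !intrM /=; ring.
Qed.

Lemma l_bound f K : odd K -> (K <= f)%N ->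
  (2^(l_fuel f K) <= K < 2^(l_fuel f K).+1)%N.
Proof.
elim: f K => [|f IH] K oK hK /=.
  by move: oK; have -> : K = 0%N by lia.
case: ifP => hK1.
  by have -> : K = 1%N by move: oK hK1; case: (K) => [|[|]].
have K0 : (0 < K.-1)%N by lia.
have [m cm Em] := pfactor_coprime (isT : prime 2) K0.
set a := logn 2 K.-1 in Em *.
have Pa : (0 < 2^a)%N by rewrite expn_gt0.
have -> : (K.-1 %/ 2^a = m)%N by rewrite Em mulnK.
rewrite coprime2n in cm.
have a0 : a != 0%N.
  apply/negP => /eqP a0; move: Em; rewrite a0 expn0 muln1 => Em.
  have : odd K = ~~ odd K.-1 by case: (K) hK1 => [|k] //= _.
  by rewrite Em cm oK.
have P2 : (2 <= 2^a)%N by rewrite -[X in (X <= _)%N]expn1 leq_exp2l //; lia.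
have hm : (m <= f)%N by nia.
have := IH m cm hm.
set b := l_fuel f m.
rewrite !expnS !expnD => /andP[h1 h2].
set P := (2^a)%N in Em Pa P2 *; set Q := (2^b)%N in h1 h2 *.
have f1 := leq_mul (leqnn P) h1; have f2 := leq_mul (leqnn P) h2.
clearbody P Q.
rewrite mulnS mulnCA in f2. rewrite mulnC in Em.
apply/andP; split; lia.
Qed.

Lemma expo_lt (s : rat) i k (w w' : int) :
  s * (3 * 2^(i+1))%:R = (2*w+1)%:~R ->
  s * (3 * 2^(i + k.+1 + 1))%:R = (2*w'+1)%:~R -> False.
Proof.
move=> H1 H2.
have e : (3 * 2^(i + k.+1 + 1) = (3 * 2^(i+1)) * (2 * 2^k))%N.
  by rewrite -expnS -mulnA -expnD; congr (_ * 2 ^ _)%N; lia.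
rewrite e natrM mulrA H1 -[(2 * 2^k)%:R]/((Posz (2 * 2^k)%N)%:~R) -intrM in H2.
move/intr_inj: H2.
set t := (2^k)%N. lia.
Qed.

Lemma key K : (9 <= K)%N -> odd K -> exists w : int,
  sigma_hat (2 * K + 1)%N * (3 * 2^((l K - 2) + 1))%:R = (2*w + 1)%:~R /\ (3 <= l K)%N.
Proof.
move=> hK oK.
have := @l_bound K K oK (leqnn K); rewrite -/(l K); set a := l K => /andP[h1 h2].
have a3 : (3 <= a)%N.
  rewrite leqNgt; apply/negP => h.
  have : (2^a.+1 <= 2^3)%N by rewrite leq_exp2l.
  lia.
have e3 : (a - 2 + 3 = a.+1)%N by lia.
have e4 : (a - 2 + 4 = a.+2)%N by lia.
have hb : (2^(a - 2 + 3) <= 2 * K + 1 <= 2^(a - 2 + 4))%N.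
  rewrite e3 e4 !expnS; rewrite expnS in h2; set P := (2^a)%N in h1 h2 *; lia.
have [w Hw] := @inv (a - 2)%N (2 * K + 1)%N hb.
exists w; split => //.
by rewrite Hw oddD oddM.
Qed.

Theorem lemma4p5 (K L : nat) :
  (9 <= K)%N -> (9 <= L)%N -> odd K -> odd L ->
  TM_equiv K L -> l K = l L.
Proof.
move=> hK hL oK oL E.
have [w [Hw a3]] := @key K hK oK.
have [w' [Hw' b3]] := @key L hL oL.
rewrite /TM_equiv in E; rewrite E in Hw.
case: (ltngtP (l K - 2) (l L - 2)) => h.
- exfalso; have [k ek] : exists k, (l L - 2 = (l K - 2) + k.+1)%N
    by exists (l L - 2 - (l K - 2)).-1; lia.
  by rewrite ek in Hw'; apply: (@expo_lt _ _ k _ _ Hw Hw').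
- exfalso; have [k ek] : exists k, (l K - 2 = (l L - 2) + k.+1)%N
    by exists (l K - 2 - (l L - 2)).-1; lia.
  by rewrite ek in Hw; apply: (@expo_lt _ _ k _ _ Hw' Hw).
- lia.
Qed.
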